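(* For integers $j,k,l>1$ let $G_{j,k,l}$ be the group with presentation $\langle x,y,z \mid x^j=e,\ y^k=e,\ xy=z^l\rangle$. Then $G_{j,k,l}/\langle\langle \mathrm{Tor}(G_{j,k,l})\rangle\rangle \cong C_l$ (cyclic of order $l$), and $\mathrm{TorLen}(G_{j,k,l})=2$.
   Context: For a group $G$, $\mathrm{Tor}(G)$ is the set of elements of finite order and $\langle\langle S\rangle\rangle$ denotes the normal closure of $S$. Define $\mathrm{Tor}_0(G)=\{e\}$ and inductively $\mathrm{Tor}_{i+1}(G)$ to be the normal closure in $G$ of $\{g\in G : g\,\mathrm{Tor}_i(G)\text{ has finite order in } G/\mathrm{Tor}_i(G)\}$; set $\mathrm{Tor}_\infty(G)=\bigcup_{i}\mathrm{Tor}_i(G)$. The torsion length $\mathrm{TorLen}(G)$ is the smallest $n\ge 0$ with $\mathrm{Tor}_n(G)=\mathrm{Tor}_\infty(G)$, and $\infty$ if no such $n$ exists. *)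

(* Defs.v *)
From HB Require Import structures.
From mathcomp Require Import all_boot all_algebra.
Set Implicit Arguments. Unset Strict Implicit. Unset Printing Implicit Defensive.

Record AbsGroup := {
  carrier :> Type;
  gmul : carrier -> carrier -> carrier;
  gone : carrier;
  ginv : carrier -> carrier;
  gmulA : forall a b c, gmul a (gmul b c) = gmul (gmul a b) c;
  gmul1l : forall a, gmul gone a = a;
  gmul1r : forall a, gmul a gone = a;
  gmulVl : forall a, gmul (ginv a) a = gone;
  gmulVr : forall a, gmul a (ginv a) = gone }.

Arguments gmul {_}. Arguments gone {_}. Arguments ginv {_}.

Fixpoint gpow (G : AbsGroup) (g : G) (n : nat) : G :=
  match n with O => gone | S m => gmul g (gpow g m) end.

Definition is_hom (G H : AbsGroup) (f : G -> H) : Prop :=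
  forall a b, f (gmul a b) = gmul (f a) (f b).

Definition generated3 (G : AbsGroup) (x y z : G) (g : G) : Prop :=
  forall P : G -> Prop,
    P gone -> (forall a b, P a -> P b -> P (gmul a b)) -> (forall a, P a -> P (ginv a)) ->
    P x -> P y -> P z -> P g.

(* G together with x,y,z is a presentation of <x,y,z | x^j, y^k, xy = z^l>:
   the relations hold, x,y,z generate G, and G has the universal property
   (any triple in any group satisfying the relations is the image of (x,y,z)
   under a homomorphism). *)
Definition is_presentation (G : AbsGroup) (x y z : G) (j k l : nat) : Prop :=
  [/\ gpow x j = gone, gpow y k = gone, gmul x y = gpow z l,
      (forall g, generated3 x y z g) &
      (forall (H : AbsGroup) (a b c : H),
          gpow a j = gone -> gpow b k = gone -> gmul a b = gpow c l ->
          exists f : G -> H, [/\ is_hom f, f x = a, f y = b & f z = c])].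

Definition normal_subgroup (G : AbsGroup) (N : G -> Prop) : Prop :=
  [/\ N gone, (forall a b, N a -> N b -> N (gmul a b)), (forall a, N a -> N (ginv a)) &
      (forall g n, N n -> N (gmul (ginv g) (gmul n g)))].

Definition normal_closure (G : AbsGroup) (S : G -> Prop) (g : G) : Prop :=
  forall N : G -> Prop, normal_subgroup N -> (forall s, S s -> N s) -> N g.

(* Tor_i(G); "g Tor_i has finite order in G/Tor_i" is written as
   "g^n \in Tor_i for some n >= 1". *)
Fixpoint Tor (G : AbsGroup) (i : nat) : G -> Prop :=
  match i with
  | O => fun g => g = gone
  | S i' => normal_closure (fun g => exists n, (0 < n)%N /\ Tor i' (gpow g n))
  end.

Definition Tor_inf (G : AbsGroup) (g : G) : Prop := exists i, Tor i g.

Definition TorLen_eq (G : AbsGroup) (n : nat) : Prop :=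
  (forall g : G, Tor n g <-> Tor_inf g) /\
  (forall m, (m < n)%N -> ~ (forall g : G, Tor m g <-> Tor_inf g)).

(* Main.v *)
Require Import Defs.
From HB Require Import structures.
From mathcomp Require Import all_boot all_algebra.
From mathcomp Require Import all_order zify ring.
From Stdlib Require Import ProofIrrelevance FunctionalExtensionality PropExtensionality ClassicalEpsilon Classical.
Import GRing.Theory.
Local Open Scope ring_scope.

Module M1.
Import GRing.Theory.

Section GroupLemmas.
Variable G : AbsGroup.
Implicit Types a b c g : G.

Lemma gKl a b : gmul (ginv a) (gmul a b) = b.
Proof. by rewrite gmulA gmulVl gmul1l. Qed.
Lemma gKr a b : gmul a (gmul (ginv a) b) = b.
Proof. by rewrite gmulA gmulVr gmul1l. Qed.
Lemma gKVl a b : gmul (gmul b a) (ginv a) = b.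
Proof. by rewrite -gmulA gmulVr gmul1r. Qed.
Lemma gKVr a b : gmul (gmul b (ginv a)) a = b.
Proof. by rewrite -gmulA gmulVl gmul1r. Qed.
Lemma ginv_uniq a b : gmul a b = gone -> b = ginv a.
Proof. move=> h; by rewrite -(gKl a b) h gmul1r. Qed.
Lemma ginvK a : ginv (ginv a) = a.
Proof. symmetry; apply: ginv_uniq; exact: gmulVl. Qed.
Lemma ginv1 : ginv (gone : G) = gone.
Proof. symmetry; apply: ginv_uniq; exact: gmul1l. Qed.
Lemma ginvM a b : ginv (gmul a b) = gmul (ginv b) (ginv a).
Proof. symmetry; apply: ginv_uniq. by rewrite -gmulA (gmulA b) gmulVr gmul1l gmulVr. Qed.
Lemma gmul_cancl a b c : gmul a b = gmul a c -> b = c.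
Proof. move=> h; by rewrite -(gKl a b) h gKl. Qed.
Lemma gpowD g m n : gpow g (m + n) = gmul (gpow g m) (gpow g n).
Proof. elim: m => [|m IH] /=; first by rewrite gmul1l. by rewrite IH gmulA. Qed.
Lemma gpowM g m n : gpow g (m * n) = gpow (gpow g m) n.
Proof. elim: n => [|n IH] /=; first by rewrite muln0. by rewrite mulnS gpowD IH. Qed.
Lemma gpow1 n : gpow (gone : G) n = gone.
Proof. elim: n => //= n ->; exact: gmul1l. Qed.
Lemma gpowS' g n : gpow g n.+1 = gmul (gpow g n) g.
Proof. by rewrite -addn1 gpowD /= gmul1r. Qed.
Lemma gpowV g n : gpow (ginv g) n = ginv (gpow g n).
Proof. elim: n => [|n IH] /=; first by rewrite ginv1. by rewrite IH -ginvM -gpowS'. Qed.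
End GroupLemmas.

Section HomLemmas.
Variables G H : AbsGroup.
Variable f : G -> H.
Hypothesis hf : is_hom f.
Lemma hom1 : f gone = gone.
Proof. apply: (@gmul_cancl _ (f gone)). by rewrite -hf !gmul1r. Qed.
Lemma homV a : f (ginv a) = ginv (f a).
Proof. apply: ginv_uniq. by rewrite -hf gmulVr hom1. Qed.
Lemma homX a n : f (gpow a n) = gpow (f a) n.
Proof. elim: n => [|n IH] /=; first exact: hom1. by rewrite hf IH. Qed.
End HomLemmas.

Section ConjPow.
Variable G : AbsGroup.
Lemma gpow_conj (x g : G) n :
  gpow (gmul x (gmul g (ginv x))) n = gmul x (gmul (gpow g n) (ginv x)).
Proof.
elim: n => [|n IH] /=; first by rewrite gmul1l gmulVr.
rewrite IH !gmulA. congr (gmul _ _). rewrite -!gmulA. congr (gmul _ _).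
by rewrite gKl.
Qed.
End ConjPow.

Section Zpow.
Variable G : AbsGroup.
Local Open Scope ring_scope.
Definition zpow (g : G) (m : int) : G :=
  match m with Posz n => gpow g n | Negz n => ginv (gpow g n.+1) end.
Lemma zpowS (g : G) m : zpow g (m + 1) = gmul g (zpow g m).
Proof.
case: m => [n|[|n]].
- have -> : (Posz n + 1 = Posz n.+1)%R by rewrite -addn1 PoszD.
  by [].
- have -> : (Negz 0 + 1 = 0)%R by [].
  by rewrite /= gmul1r gmulVr.
- have -> : (Negz n.+1 + 1 = Negz n)%R by rewrite !NegzE; lia.
  rewrite /zpow [gpow g n.+2]gpowS' ginvM. by rewrite gKr.
Qed.
Lemma zpowN1 (g : G) m : zpow g (m - 1) = gmul (ginv g) (zpow g m).
Proof.
have := zpowS g (m - 1). rewrite subrK => ->. by rewrite gKl.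
Qed.
Lemma zpow0 (g : G) : zpow g 0 = gone. Proof. by []. Qed.
Lemma zpowD (g : G) m n : zpow g (m + n) = gmul (zpow g m) (zpow g n).
Proof.
elim/int_rec: m => [|m IH|m IH].
- by rewrite add0r zpow0 gmul1l.
- have -> : (Posz m.+1 = Posz m + 1)%R by rewrite -addn1 PoszD.
  by rewrite -addrAC zpowS IH zpowS gmulA.
- have -> : (- Posz m.+1 = - Posz m - 1)%R by rewrite -addn1 PoszD opprD.
  by rewrite -addrAC zpowN1 IH zpowN1 gmulA.
Qed.
End Zpow.

End M1.
Import M1.

Module M2.
Import GRing.Theory.
Local Open Scope ring_scope.

Record Fac := {
  fF :> AbsGroup;
  femb : int -> fF;
  femb_add : forall m n, femb (m + n) = gmul (femb m) (femb n);
  fT : Type;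
  ft1 : fT;
  ftv : fT -> fF;
  ftv1 : ftv ft1 = gone;
  fdec : fF -> int * fT;
  fdec_spec : forall f, f = gmul (femb (fdec f).1) (ftv (fdec f).2);
  fdec_emb : forall m f, fdec (gmul (femb m) f) = (m + (fdec f).1, (fdec f).2);
  fdec_tv : forall t, fdec (ftv t) = (0, t)
}.

Arguments fdec {_}. Arguments ftv {_}. Arguments fdec_spec {_}. Arguments fdec_emb {_}. Arguments fdec_tv {_}. Arguments femb_add {_}. Arguments ftv1 {_}.

Definition istriv {T : Type} (t1 t : T) : bool :=
  if excluded_middle_informative (t = t1) then true else false.
Lemma istrivP {T : Type} (t1 t : T) : reflect (t = t1) (istriv t1 t).
Proof. rewrite /istriv; case: excluded_middle_informative => h; by constructor. Qed.

Section FacLemmas.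
Variable P : Fac.
Lemma femb0 : femb P 0 = gone.
Proof. apply: (@gmul_cancl _ (femb P 0)). by rewrite -femb_add addr0 gmul1r. Qed.
Lemma fdec_emb0 m : fdec (femb P m) = (m, ft1 P).
Proof.
have -> : femb P m = gmul (femb P m) (ftv (ft1 P)) by rewrite ftv1 gmul1r.
by rewrite fdec_emb fdec_tv addr0.
Qed.
Lemma femb_inj m n : femb P m = femb P n -> m = n.
Proof. move=> h. by have := fdec_emb0 m; rewrite h fdec_emb0 => -[]. Qed.
End FacLemmas.

Section Side.
Variable P : Fac.
Variable syl : Type.
Variable valid : seq syl -> Prop.
Variable inj : fT P -> syl.
Variable proj : syl -> option (fT P).
Hypothesis proj_inj : forall t, proj (inj t) = Some t.
Hypothesis proj_some : forall s t, proj s = Some t -> s = inj t.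
Definition notP (Ls : seq syl) := match Ls with [::] => True | s :: _ => proj s = None end.
Hypothesis valid_cons : forall t Ls, valid (inj t :: Ls) <-> [/\ t <> ft1 P, notP Ls & valid Ls].
Hypothesis valid_tail : forall s Ls, valid (s :: Ls) -> valid Ls.

Definition headP (w : int * seq syl) : P * seq syl :=
  match w.2 with
  | s :: Ls => match proj s with Some t => (gmul (femb P w.1) (ftv t), Ls)
             | None => (femb P w.1, w.2) end
  | [::] => (femb P w.1, [::]) end.
Definition pushP (p : int * fT P) (Ls : seq syl) : int * seq syl :=
  (p.1, if istriv (ft1 P) p.2 then Ls else inj p.2 :: Ls).
Definition actP (y : P) (w : int * seq syl) :=
  pushP (fdec (gmul y (headP w).1)) (headP w).2.
Definition shift (n : int) (w : int * seq syl) := (n + w.1, w.2).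

Lemma head_notP w : valid w.2 -> notP (headP w).2 /\ valid (headP w).2.
Proof.
case: w => m [|s Ls] /= hv; first by split.
rewrite /headP /=. case e: (proj s) => [t|] /=.
  by move: hv; rewrite (proj_some _ _ e) => /valid_cons [_ ? ?]; split.
by split => //=; rewrite e.
Qed.
Arguments head_notP {w}.
Lemma push_valid p Ls : valid Ls -> notP Ls -> valid (pushP p Ls).2.
Proof. rewrite /pushP /=; case: istrivP => // h hv hn; by apply/valid_cons. Qed.
Lemma head_push d Ls : notP Ls -> headP (pushP (fdec d) Ls) = (d, Ls).
Proof.
rewrite /pushP /headP /=; case: istrivP => [e|ne] hn.
  have := fdec_spec d; rewrite e ftv1 gmul1r => hd.
  case: Ls hn => [|s Ls] /= hn; first by rewrite -hd.
  by rewrite hn -hd.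
by rewrite proj_inj -fdec_spec.
Qed.
Lemma push_head w : valid w.2 -> pushP (fdec (headP w).1) (headP w).2 = w.
Proof.
case: w => m [|s Ls] /= hv.
  rewrite /headP /pushP fdec_emb0 /=. by case: istrivP.
rewrite /headP /=. case e: (proj s) => [t|] /=.
  move: hv; rewrite (proj_some _ _ e) => /valid_cons [nt _ _].
  rewrite /pushP fdec_emb fdec_tv addr0 /=. by case: istrivP.
rewrite /pushP fdec_emb0 /=. by case: istrivP.
Qed.
Arguments push_head {w}.
Lemma act_valid y w : valid w.2 -> valid (actP y w).2.
Proof. move=> hv; have [h1 h2] := head_notP hv. exact: push_valid. Qed.
Lemma act_mul y1 y2 w : valid w.2 -> actP y1 (actP y2 w) = actP (gmul y1 y2) w.
Proof.
move=> hv; have [h1 h2] := head_notP hv.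
rewrite /actP. rewrite [headP (pushP _ _)]head_push //=. by rewrite gmulA.
Qed.
Lemma act_1 w : valid w.2 -> actP gone w = w.
Proof. move=> hv; rewrite /actP gmul1l; exact: push_head. Qed.
Lemma act_emb n w : valid w.2 -> actP (femb P n) w = shift n w.
Proof.
move=> hv; have e := push_head hv. rewrite /actP fdec_emb. rewrite -[in RHS]e. by rewrite /pushP /shift /=.
Qed.
Lemma act_len y w : (size (actP y w).2 <= (size w.2).+1)%N.
Proof.
rewrite /actP /pushP /headP; case: w => m [|s Ls] /=.
  by case: istrivP.
case: (proj s) => [t|] /=; case: istrivP => //= _; lia.
Qed.
Lemma act_prepend t w : notP w.2 -> t <> ft1 P ->
  exists m' r, actP (ftv t) w = (m', inj r :: w.2).
Proof.
case: w => m Ls /= hn nt.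
have hh : headP (m, Ls) = (femb P m, Ls).
  by rewrite /headP /=; case: Ls hn => [|s Ls] //= ->.
rewrite /actP hh /pushP /=. case: istrivP => [e|ne]; last by eauto.
exfalso; apply: nt.
have := fdec_spec (gmul (ftv t) (femb P m)). rewrite e ftv1 gmul1r => h.
have : ftv t = femb P ((fdec (gmul (ftv t) (femb P m))).1 - m).
  by rewrite femb_add -h -gmulA -femb_add subrr femb0 gmul1r.
move=> /(f_equal (@fdec P)). by rewrite fdec_tv fdec_emb0 => -[].
Qed.
End Side.
Arguments notP {P syl} proj Ls.
Arguments headP {P syl} proj w.
Arguments pushP {P syl} inj p Ls.
Arguments actP {P syl} inj proj y w.
Arguments shift {syl} n w.

End M2.
Import M2.

Module M3.
Import GRing.Theory.
Local Open Scope ring_scope.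

Section Amalgam.
Variables A B : Fac.
Inductive syl := SA of fT A | SB of fT B.
Definition projA s := match s with SA t => Some t | _ => None end.
Definition projB s := match s with SB t => Some t | _ => None end.
Definition isA s := match s with SA _ => true | _ => false end.
Definition nontriv s := match s with SA t => t <> ft1 A | SB t => t <> ft1 B end.
Definition alt s (Ls : seq syl) := match Ls with [::] => True | s' :: _ => isA s <> isA s' end.
Fixpoint valid (Ls : seq syl) : Prop :=
  match Ls with [::] => True | s :: Ls' => [/\ nontriv s, alt s Ls' & valid Ls'] end.

Lemma validA_cons t Ls : valid (SA t :: Ls) <-> [/\ t <> ft1 A, notP projA Ls & valid Ls].
Proof. case: Ls => [|[u|u] Ls] /=; split; by case. Qed.
Lemma validB_cons t Ls : valid (SB t :: Ls) <-> [/\ t <> ft1 B, notP projB Ls & valid Ls].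
Proof. case: Ls => [|[u|u] Ls] /=; split; by case. Qed.
Lemma valid_tl s Ls : valid (s :: Ls) -> valid Ls.
Proof. by case. Qed.

Lemma projA_some s t : projA s = Some t -> s = SA t.
Proof. by case: s => //= ? [->]. Qed.
Lemma projB_some s t : projB s = Some t -> s = SB t.
Proof. by case: s => //= ? [->]. Qed.

Ltac closeS := repeat match goal with
 | |- forall s t, projA s = Some t -> s = SA t => exact: projA_some
 | |- forall s t, projB s = Some t -> s = SB t => exact: projB_some
 | |- forall t, projA (SA t) = Some t => by []
 | |- forall t, projB (SB t) = Some t => by []
 | |- forall t Ls, valid (SA t :: Ls) <-> _ => exact: validA_cons
 | |- forall t Ls, valid (SB t :: Ls) <-> _ => exact: validB_cons
 | |- forall s Ls, valid (s :: Ls) -> valid Ls => exact: valid_tl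
 end.

Notation Raw := (int * seq syl)%type.
Definition actA := actP SA projA.
Definition actB := actP SB projB.
Definition vd (w : Raw) := valid w.2.

Lemma actA_valid y w : vd w -> vd (actA y w).
Proof. apply: act_valid; closeS. Qed.
Lemma actB_valid y w : vd w -> vd (actB y w).
Proof. apply: act_valid; closeS. Qed.
Lemma actA_mul y1 y2 w : vd w -> actA y1 (actA y2 w) = actA (gmul y1 y2) w.
Proof. apply: act_mul; closeS. Qed.
Lemma actB_mul y1 y2 w : vd w -> actB y1 (actB y2 w) = actB (gmul y1 y2) w.
Proof. apply: act_mul; closeS. Qed.
Lemma actA_1 w : vd w -> actA gone w = w.
Proof. apply: act_1; closeS. Qed.
Lemma actB_1 w : vd w -> actB gone w = w.
Proof. apply: act_1; closeS. Qed.
Lemma actA_emb n w : vd w -> actA (femb A n) w = shift n w.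
Proof. apply: act_emb; closeS. Qed.
Lemma actB_emb n w : vd w -> actB (femb B n) w = shift n w.
Proof. apply: act_emb; closeS. Qed.
Lemma shift_valid n (w : Raw) : vd w -> vd (shift n w).
Proof. by []. Qed.
Lemma shift_shift m n (w : Raw) : shift m (shift n w) = shift (m + n) w.
Proof. by rewrite /shift /= addrA. Qed.
Lemma shift0 (w : Raw) : shift 0 w = w.
Proof. by case: w => ? ?; rewrite /shift /= add0r. Qed.

Fixpoint ev_list (Ls : seq syl) (w : Raw) : Raw :=
  match Ls with [::] => w
  | SA t :: Ls' => actA (ftv t) (ev_list Ls' w)
  | SB t :: Ls' => actB (ftv t) (ev_list Ls' w) end.
Definition ev (u : Raw) (w : Raw) : Raw := shift u.1 (ev_list u.2 w).

Lemma ev_list_valid Ls w : vd w -> vd (ev_list Ls w).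
Proof.
elim: Ls => [|[t|t] Ls IH] //= hv; [apply: actA_valid|apply: actB_valid]; exact: IH.
Qed.
Lemma ev_valid u w : vd w -> vd (ev u w).
Proof. move=> hv; exact: ev_list_valid. Qed.

Lemma E1A u v : vd v ->
  ev u v = actA (headP projA u).1 (ev_list (headP projA u).2 v).
Proof.
case: u => m [|[t|t] Ls] /= hv; rewrite /ev /headP /=.
- by rewrite actA_emb.
- rewrite -actA_mul; last exact: ev_list_valid.
  rewrite actA_emb //; apply: actA_valid; exact: ev_list_valid.
- rewrite actA_emb //; apply: actB_valid; exact: ev_list_valid.
Qed.
Lemma E1B u v : vd v ->
  ev u v = actB (headP projB u).1 (ev_list (headP projB u).2 v).
Proof.
case: u => m [|[t|t] Ls] /= hv; rewrite /ev /headP /=.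
- by rewrite actB_emb.
- rewrite actB_emb //; apply: actA_valid; exact: ev_list_valid.
- rewrite -actB_mul; last exact: ev_list_valid.
  rewrite actB_emb //; apply: actB_valid; exact: ev_list_valid.
Qed.

Lemma ev_actA y u v : vd u -> vd v -> ev (actA y u) v = actA y (ev u v).
Proof.
move=> hu hv.
have [hn hvt] := @head_notP A syl valid SA projA projA_some validA_cons u hu.
rewrite (E1A u v hv) (E1A (actA y u) v hv).
have -> : headP projA (actA y u) = (gmul y (headP projA u).1, (headP projA u).2).
  exact: (@head_push A syl SA projA (fun t => erefl) _ _ hn).
rewrite /= -actA_mul //; exact: ev_list_valid.
Qed.
Lemma ev_actB y u v : vd u -> vd v -> ev (actB y u) v = actB y (ev u v).
Proof.
move=> hu hv.
have [hn hvt] := @head_notP B syl valid SB projB projB_some validB_cons u hu.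
rewrite (E1B u v hv) (E1B (actB y u) v hv).
have -> : headP projB (actB y u) = (gmul y (headP projB u).1, (headP projB u).2).
  exact: (@head_push B syl SB projB (fun t => erefl) _ _ hn).
rewrite /= -actB_mul //; exact: ev_list_valid.
Qed.

Lemma ev_shift n x w : ev (shift n x) w = shift n (ev x w).
Proof. by rewrite /ev /= shift_shift. Qed.
Lemma ev_ev_list Ls v w : vd v -> vd w -> ev (ev_list Ls v) w = ev_list Ls (ev v w).
Proof.
move=> hv hw; elim: Ls => [|[t|t] Ls IH] //=.
  by rewrite ev_actA ?IH //; apply: ev_list_valid.
by rewrite ev_actB ?IH //; apply: ev_list_valid.
Qed.
Lemma ev_hom u v w : vd v -> vd w -> ev (ev u v) w = ev u (ev v w).
Proof. move=> hv hw; have -> : ev u v = shift u.1 (ev_list u.2 v) by []. by rewrite ev_shift ev_ev_list. Qed.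

Definition one : Raw := (0, [::]).
Lemma one_valid : vd one. Proof. by []. Qed.
Lemma ev_one_l v : ev one v = v.
Proof. exact: shift0. Qed.

Lemma actA_cons t L : valid (SA t :: L) -> actA (ftv t) (0, L) = (0, SA t :: L).
Proof.
move=> /validA_cons [nt hn _].
have hh : headP projA (0, L) = (femb A 0, L).
  by rewrite /headP /=; case: L hn => [|s L] //= ->.
rewrite /actA /actP hh /= femb0 gmul1r fdec_tv /pushP /=.
by case: istrivP.
Qed.
Lemma actB_cons t L : valid (SB t :: L) -> actB (ftv t) (0, L) = (0, SB t :: L).
Proof.
move=> /validB_cons [nt hn _].
have hh : headP projB (0, L) = (femb B 0, L).
  by rewrite /headP /=; case: L hn => [|s L] //= ->.
rewrite /actB /actP hh /= femb0 gmul1r fdec_tv /pushP /=.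
by case: istrivP.
Qed.
Lemma ev_list_cat L L2 : valid (L ++ L2) -> ev_list L (0, L2) = (0, L ++ L2).
Proof.
elim: L => [|[t|t] L IH] hv //=.
  by rewrite IH ?actA_cons //; apply: valid_tl hv.
by rewrite IH ?actB_cons //; apply: valid_tl hv.
Qed.
Lemma ev_one_r w : vd w -> ev w one = w.
Proof.
case: w => m L hv; rewrite /ev /one /= ev_list_cat ?cats0 //.
by rewrite /shift /= addr0.
Qed.

Fixpoint ev_list_inv (Ls : seq syl) (w : Raw) : Raw :=
  match Ls with [::] => w
  | SA t :: Ls' => ev_list_inv Ls' (actA (ginv (ftv t)) w)
  | SB t :: Ls' => ev_list_inv Ls' (actB (ginv (ftv t)) w) end.
Definition inv_ev (u : Raw) (w : Raw) : Raw := ev_list_inv u.2 (shift (- u.1) w).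

Lemma ev_list_inv_valid Ls w : vd w -> vd (ev_list_inv Ls w).
Proof.
elim: Ls w => [|[t|t] Ls IH] //= w hv; apply: IH; [apply: actA_valid|apply: actB_valid]; exact: hv.
Qed.
Lemma inv_ev_valid u w : vd w -> vd (inv_ev u w).
Proof. move=> hv; exact: ev_list_inv_valid. Qed.
Lemma ev_list_invK Ls w : vd w -> ev_list_inv Ls (ev_list Ls w) = w.
Proof.
elim: Ls w => [|[t|t] Ls IH] //= w hv.
  by rewrite actA_mul ?gmulVl ?actA_1 ?IH //; apply: ev_list_valid.
by rewrite actB_mul ?gmulVl ?actB_1 ?IH //; apply: ev_list_valid.
Qed.
Lemma ev_listK Ls w : vd w -> ev_list Ls (ev_list_inv Ls w) = w.
Proof.
elim: Ls w => [|[t|t] Ls IH] //= w hv.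
  by rewrite IH ?actA_mul ?gmulVr ?actA_1 //; apply: actA_valid.
by rewrite IH ?actB_mul ?gmulVr ?actB_1 //; apply: actB_valid.
Qed.
Lemma inv_evK u w : vd w -> inv_ev u (ev u w) = w.
Proof.
move=> hv; rewrite /inv_ev /ev shift_shift addNr shift0; exact: ev_list_invK.
Qed.
Lemma evK u w : vd w -> ev u (inv_ev u w) = w.
Proof.
move=> hv; rewrite /inv_ev /ev ev_listK // shift_shift subrr; exact: shift0.
Qed.
Lemma ev_ev_list_inv L x w : vd x -> vd w -> ev (ev_list_inv L x) w = ev_list_inv L (ev x w).
Proof.
move=> hx hw; elim: L x hx => [|[t|t] L IH] //= x hx.
  by rewrite IH ?ev_actA //; apply: actA_valid.
by rewrite IH ?ev_actB //; apply: actB_valid.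
Qed.
Lemma ev_inv_ev u v w : vd v -> vd w -> ev (inv_ev u v) w = inv_ev u (ev v w).
Proof. move=> hv hw; by rewrite /inv_ev ev_ev_list_inv // ev_shift. Qed.

Definition X := {w : Raw | vd w}.
Lemma Xeq (a b : X) : sval a = sval b -> a = b.
Proof. case: a b => a ha [b hb] /= e; subst b; f_equal; apply: proof_irrelevance. Qed.
Definition Xmul (a b : X) : X := exist _ (ev (sval a) (sval b)) (ev_valid (sval a) (sval b) (proj2_sig b)).
Definition Xone : X := exist _ one one_valid.
Definition Xinv (a : X) : X := exist _ (inv_ev (sval a) one) (inv_ev_valid (sval a) one one_valid).
Lemma XmulA a b c : Xmul a (Xmul b c) = Xmul (Xmul a b) c.
Proof. apply: Xeq => /=; rewrite ev_hom //; [exact: proj2_sig|exact: proj2_sig]. Qed.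
Lemma Xmul1l a : Xmul Xone a = a.
Proof. apply: Xeq => /=; exact: ev_one_l. Qed.
Lemma Xmul1r a : Xmul a Xone = a.
Proof. apply: Xeq => /=; apply: ev_one_r; exact: proj2_sig. Qed.
Lemma XmulVl a : Xmul (Xinv a) a = Xone.
Proof.
apply: Xeq => /=. rewrite ev_inv_ev //; last exact: proj2_sig.
rewrite ev_one_l -{2}(ev_one_r (sval a) (proj2_sig a)). exact: inv_evK.
Qed.
Lemma XmulVr a : Xmul a (Xinv a) = Xone.
Proof. apply: Xeq => /=. exact: evK. Qed.
Definition HX : AbsGroup := Build_AbsGroup XmulA Xmul1l Xmul1r XmulVl XmulVr.

Definition iA (y : A) : HX := exist _ (actA y one) (actA_valid y one one_valid).
Definition iB (y : B) : HX := exist _ (actB y one) (actB_valid y one one_valid).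
Lemma iA_mul y (w : HX) : sval (gmul (iA y) w) = actA y (sval w).
Proof. by rewrite /= ev_actA // ?ev_one_l //; exact: proj2_sig. Qed.
Lemma iB_mul y (w : HX) : sval (gmul (iB y) w) = actB y (sval w).
Proof. by rewrite /= ev_actB // ?ev_one_l //; exact: proj2_sig. Qed.
Lemma iA_hom : is_hom iA.
Proof. move=> a b; apply: Xeq; rewrite iA_mul /= actA_mul //. Qed.
Lemma iB_hom : is_hom iB.
Proof. move=> a b; apply: Xeq; rewrite iB_mul /= actB_mul //. Qed.
Lemma iA_emb m : sval (iA (femb A m)) = (m, [::]).
Proof. by rewrite /= actA_emb // /shift /= addr0. Qed.
Lemma iB_emb m : sval (iB (femb B m)) = (m, [::]).
Proof. by rewrite /= actB_emb // /shift /= addr0. Qed.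

Definition firstA (L : seq syl) := match L with [::] => None | s :: _ => Some (isA s) end.
Lemma notPA_first L : firstA L <> Some true -> notP projA L.
Proof. by case: L => [|[t|t] L] //=. Qed.
Lemma notPB_first L : firstA L <> Some false -> notP projB L.
Proof. by case: L => [|[t|t] L] //=. Qed.

Lemma validA_nt t L : valid (SA t :: L) -> t <> ft1 A.
Proof. by case. Qed.
Lemma validB_nt t L : valid (SB t :: L) -> t <> ft1 B.
Proof. by case. Qed.
Lemma ev_list_grow L s w : valid (s :: L) -> firstA w.2 <> Some (isA (last s L)) ->
  size (ev_list (s :: L) w).2 = ((size L).+1 + size w.2)%N /\
  firstA (ev_list (s :: L) w).2 = Some (isA s).
Proof.
elim: L s => [|s' L IH] s.
  case: s => t hv hf.
    have := @act_prepend A syl SA projA t w (notPA_first _ hf) (validA_nt t [::] hv) => -[m' [r e]].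
    have -> : ev_list [:: SA t] w = actA (ftv t) w by [].
    by rewrite /actA e.
  have := @act_prepend B syl SB projB t w (notPB_first _ hf) (validB_nt t [::] hv) => -[m' [r e]].
  have -> : ev_list [:: SB t] w = actB (ftv t) w by [].
  by rewrite /actB e.
move=> hv hf.
have hv' : valid (s' :: L) by case: hv.
have [IH1 IH2] := IH s' hv' hf.
have halt : isA s <> isA s' by case: hv.
case: s hv halt hf => t hv halt hf.
  have hn : notP projA (ev_list (s' :: L) w).2.
    apply: notPA_first; rewrite IH2; by case: s' halt {hv hv' IH IH1 IH2 hf}.
  have [m' [r e]] := @act_prepend A syl SA projA t _ hn (validA_nt _ _ hv).
  have -> : ev_list (SA t :: s' :: L) w = actA (ftv t) (ev_list (s' :: L) w) by [].
  by rewrite /actA e /= IH1.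
have hn : notP projB (ev_list (s' :: L) w).2.
  apply: notPB_first; rewrite IH2; by case: s' halt {hv hv' IH IH1 IH2 hf}.
have [m' [r e]] := @act_prepend B syl SB projB t _ hn (validB_nt _ _ hv).
have -> : ev_list (SB t :: s' :: L) w = actB (ftv t) (ev_list (s' :: L) w) by [].
by rewrite /actB e /= IH1.
Qed.

Lemma pow_grow (g : HX) s L m : sval g = (m, s :: L) -> isA s <> isA (last s L) ->
  forall k, size (sval (gpow g k.+1)).2 = (k.+1 * (size L).+1)%N /\
            firstA (sval (gpow g k.+1)).2 = Some (isA s).
Proof.
move=> eg hne; elim=> [|k [IH1 IH2]].
  have -> : gpow g 1 = gmul g gone by []. by rewrite gmul1r eg /= mul1n.
have -> : gpow g k.+2 = gmul g (gpow g k.+1) by [].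
have hv : valid (s :: L) by have := proj2_sig g; rewrite eg.
have hf : firstA (sval (gpow g k.+1)).2 <> Some (isA (last s L)) by rewrite IH2 => -[].
have [h1 h2] := ev_list_grow _ _ _ hv hf.
have e : sval (gmul g (gpow g k.+1)) = ev (sval g) (sval (gpow g k.+1)) by [].
rewrite e eg. change (size (ev_list (s :: L) (sval (gpow g k.+1))).2 = (k.+2 * (size L).+1)%N /\
  firstA (ev_list (s :: L) (sval (gpow g k.+1))).2 = Some (isA s)).
rewrite h1 IH1 h2 mulSn. by [].
Qed.

Variable V : zmodType.
Variable chi : B -> V.
Hypothesis chiM : forall a b, chi (gmul a b) = chi a + chi b.
Hypothesis chi_emb : forall m, chi (femb B m) = 0.

Lemma chi1 : chi gone = 0.
Proof. apply: (@addrI _ (chi gone)); by rewrite -chiM gmul1l addr0. Qed.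

Fixpoint pil (L : seq syl) : V :=
  match L with [::] => 0 | SA _ :: L' => pil L' | SB t :: L' => chi (ftv t) + pil L' end.

Lemma pil_actA y w : pil (actA y w).2 = pil w.2.
Proof.
case: w => m [|[t|t] L]; rewrite /actA /actP /pushP /headP /=; by case: istrivP.
Qed.
Lemma pil_pushB d L : pil (pushP SB (fdec d) L).2 = chi d + pil L.
Proof.
rewrite /pushP /=. rewrite {3}(fdec_spec d) chiM chi_emb add0r.
case: istrivP => [->|//]. by rewrite ftv1 chi1 add0r.
Qed.
Lemma chi_headB w : chi (headP projB w).1 + pil (headP projB w).2 = pil w.2.
Proof.
case: w => m [|[t|t] L]; rewrite /headP /= ?chiM ?chi_emb ?add0r //.
Qed.
Lemma pil_actB y w : pil (actB y w).2 = chi y + pil w.2.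
Proof. by rewrite /actB /actP pil_pushB chiM -addrA chi_headB. Qed.
Lemma pil_ev u v : pil (ev u v).2 = pil u.2 + pil v.2.
Proof.
rewrite /ev /shift /=. elim: u.2 => [|[t|t] L IH] /=; first by rewrite add0r.
  by rewrite pil_actA IH.
by rewrite pil_actB IH addrA.
Qed.
Definition piX (g : HX) := pil (sval g).2.
Lemma piX_mul a b : piX (gmul a b) = piX a + piX b.
Proof. exact: pil_ev. Qed.
Lemma piX_one : piX gone = 0.
Proof. by []. Qed.
Lemma piX_inv a : piX (ginv a) = - piX a.
Proof.
apply/eqP; rewrite -addr_eq0 -piX_mul gmulVl. by [].
Qed.
Lemma piX_iA y : piX (iA y) = 0.
Proof. change (pil (actA y one).2 = 0); by rewrite pil_actA. Qed.
Lemma piX_iB y : piX (iB y) = chi y.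
Proof. change (pil (actB y one).2 = chi y); by rewrite pil_actB addr0. Qed.

Lemma valid_catl L L' : valid (L ++ L') -> valid L.
Proof.
elim: L => [|s L IH] //= [h1 h2 h3]; split => //; last exact: IH.
by case: L h2 {IH h3}.
Qed.
Lemma valid_catr L L' : valid (L ++ L') -> valid L'.
Proof. elim: L => [|s L IH] //= [_ _ h]; exact: IH. Qed.

Lemma iB_one_inv z : iB z = gone -> z = gone.
Proof.
move=> /(f_equal sval) e.
change (actB z one = one) in e.
move: e; rewrite /actB /actP /headP /= femb0 gmul1r /pushP.
case: istrivP => [tr|nt] //= [e1].
by rewrite (fdec_spec z) e1 tr ftv1 femb0 gmul1r.
Qed.
Lemma iB_single m t : valid [:: SB t] -> sval (iB (gmul (femb B m) (ftv t))) = (m, [:: SB t]).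
Proof.
move=> hv; change (actB (gmul (femb B m) (ftv t)) one = (m, [:: SB t])).
rewrite /actB /actP /headP /= femb0 gmul1r fdec_emb fdec_tv addr0 /pushP /=.
by case: istrivP => // e; case: hv.
Qed.

Lemma conjA_red (g : HX) m a b L1 : sval g = (m, SA a :: L1 ++ [:: SA b]) ->
  exists x : HX, (size (sval (gmul x (gmul g (ginv x)))).2 < size (sval g).2)%N.
Proof.
move=> eg. have hv : valid (SA a :: L1 ++ [:: SA b]) by have := proj2_sig g; rewrite eg.
have hv1 : valid (L1 ++ [:: SA b]) := valid_tl _ _ hv.
have hvL1 : valid L1 := valid_catl _ _ hv1.
have hvb : valid [:: SA b] := valid_catr _ _ hv1.
pose eP : HX := exist _ (0, L1) hvL1.
have eP_en : sval (gmul eP (iA (ftv b))) = (0, L1 ++ [:: SA b]).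
  change (shift 0 (ev_list L1 (actA (ftv b) one)) = (0, L1 ++ [:: SA b])).
  by rewrite (actA_cons _ _ hvb) ev_list_cat // shift0.
have eg' : g = gmul (iA (femb A m)) (gmul (iA (ftv a)) (gmul eP (iA (ftv b)))).
  apply: Xeq. rewrite iA_mul iA_mul eP_en eg actA_cons // actA_emb //.
  by rewrite /shift /= addr0.
exists (iA (ftv b)).
rewrite {1}eg' !gmulA gKVl -!iA_hom.
rewrite iA_mul /= eg /= size_cat /= addn1.
apply: (leq_ltn_trans (@act_len A syl SA projA _ _)) => /=.
by [].
Qed.

Lemma conjB_red (g : HX) m a b L1 : sval g = (m, SB a :: L1 ++ [:: SB b]) ->
  exists x : HX, (size (sval (gmul x (gmul g (ginv x)))).2 < size (sval g).2)%N.
Proof.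
move=> eg. have hv : valid (SB a :: L1 ++ [:: SB b]) by have := proj2_sig g; rewrite eg.
have hv1 : valid (L1 ++ [:: SB b]) := valid_tl _ _ hv.
have hvL1 : valid L1 := valid_catl _ _ hv1.
have hvb : valid [:: SB b] := valid_catr _ _ hv1.
pose eP : HX := exist _ (0, L1) hvL1.
have eP_en : sval (gmul eP (iB (ftv b))) = (0, L1 ++ [:: SB b]).
  change (shift 0 (ev_list L1 (actB (ftv b) one)) = (0, L1 ++ [:: SB b])).
  by rewrite (actB_cons _ _ hvb) ev_list_cat // shift0.
have eg' : g = gmul (iB (femb B m)) (gmul (iB (ftv a)) (gmul eP (iB (ftv b)))).
  apply: Xeq. rewrite iB_mul iB_mul eP_en eg actB_cons // actB_emb //.
  by rewrite /shift /= addr0.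
exists (iB (ftv b)).
rewrite {1}eg' !gmulA gKVl -!iB_hom.
rewrite iB_mul /= eg /= size_cat /= addn1.
apply: (leq_ltn_trans (@act_len B syl SB projB _ _)) => /=.
by [].
Qed.

Hypothesis chi_tors : forall y n, (0 < n)%N -> gpow y n = gone -> chi y = 0.

Theorem tors_pi (g : HX) n : (0 < n)%N -> gpow g n = gone -> piX g = 0.
Proof.
move=> n0.
have [N] := ubnP (size (sval g).2). elim: N g => // N IH g hN hg.
case eg: (sval g) => [m L].
case: L eg => [|s L] eg; first by rewrite /piX eg.
case: (lastP L) eg => [|L1 sn] eg.
  case: s eg => t eg; first by rewrite /piX eg.
  have hv : valid [:: SB t] by have := proj2_sig g; rewrite eg.
  have gi : g = iB (gmul (femb B m) (ftv t)) by apply: Xeq; rewrite eg iB_single.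
  rewrite gi piX_iB. apply: (chi_tors _ _ n0). apply: iB_one_inv.
  by rewrite (homX _ _ _ iB_hom) -gi hg.
case: (boolP (isA s == isA sn)) => [/eqP same|diff].
  have red : exists x : HX, (size (sval (gmul x (gmul g (ginv x)))).2 < size (sval g).2)%N.
    move: eg; rewrite -cats1.
    case: s same => t; case: sn => u //= _ eg.
      exact: (conjA_red _ _ _ _ _ eg).
    exact: (conjB_red _ _ _ _ _ eg).
  case: red => x hx.
  have -> : piX g = piX (gmul x (gmul g (ginv x))).
    by rewrite !piX_mul piX_inv addrC -addrA addNr addr0.
  apply: IH.
    by rewrite -ltnS; apply: leq_trans hN.
  by rewrite gpow_conj hg gmul1l gmulVr.
exfalso.
have hne : isA s <> isA (last s (rcons L1 sn)) by rewrite last_rcons => /eqP; rewrite (negbTE diff).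
have [h1 _] := pow_grow _ _ _ _ eg hne n.-1.
move: h1; rewrite prednK // hg => h1.
have : (0 < n * (size (rcons L1 sn)).+1)%N by rewrite muln_gt0 n0.
by rewrite -h1.
Qed.
End Amalgam.

End M3.
Import M3.

Module M4.
Import GRing.Theory.
Local Open Scope ring_scope.

Section MkFac.
Variable K : AbsGroup.
Variable emb : int -> K.
Hypothesis emb_add : forall m n, emb (m + n) = gmul (emb m) (emb n).
Hypothesis emb_triv : forall m, emb m = gone -> m = 0.

Lemma emb0 : emb 0 = gone.
Proof. apply: (@gmul_cancl _ (emb 0)). by rewrite -emb_add addr0 gmul1r. Qed.
Lemma emb_inj m n : emb m = emb n -> m = n.
Proof.
move=> e. have : emb (m - n) = gone.
  apply: (@gmul_cancl _ (emb n)). by rewrite -emb_add addrC subrK e gmul1r.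
move=> /emb_triv. lia.
Qed.

Definition cos (d : K) := fun r => exists m, r = gmul (emb m) d.
Definition inC (d : K) := exists m, d = emb m.
Definition rep (d : K) : K :=
  if excluded_middle_informative (inC d) then gone else epsilon (inhabits d) (cos d).

Lemma cos_emb m d : cos (gmul (emb m) d) = cos d.
Proof.
apply: functional_extensionality => r; apply: propositional_extensionality.
split=> -[m' e].
  exists (m' + m); by rewrite e emb_add gmulA.
exists (m' - m); by rewrite e gmulA -emb_add subrK.
Qed.
Lemma inC_emb m d : inC (gmul (emb m) d) <-> inC d.
Proof.
split=> -[m' e].
  exists (m' - m). apply: (@gmul_cancl _ (emb m)). by rewrite e -emb_add addrC subrK.
exists (m + m'); by rewrite e emb_add.
Qed.
Lemma rep_emb m d : rep (gmul (emb m) d) = rep d.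
Proof.
rewrite /rep cos_emb.
case: excluded_middle_informative => h1; case: excluded_middle_informative => h2 /=.
- by [].
- by exfalso; apply: h2; apply/(inC_emb m).
- by exfalso; apply: h1; apply/(inC_emb m).
- by rewrite (proof_irrelevance _ (inhabits (gmul (emb m) d)) (inhabits d)).
Qed.
Lemma rep_cos d : cos d (rep d).
Proof.
rewrite /rep; case: excluded_middle_informative => h /=.
  have [m e] := h. exists (- m). by rewrite e -emb_add addNr emb0.
apply: (@epsilon_spec K (inhabits d) (cos d)). exists d; exists 0; by rewrite emb0 gmul1l.
Qed.
Lemma rep_rep d : rep (rep d) = rep d.
Proof. have [m e] : exists m, rep d = gmul (emb m) d := rep_cos d. by rewrite {1}e rep_emb. Qed.

Definition RT := {r : K | rep r = r}.
Lemma rep1 : rep gone = gone.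
Proof.
rewrite /rep; case: excluded_middle_informative => // h; exfalso; apply: h.
exists 0; by rewrite emb0.
Qed.
Definition rt1' : RT := exist _ gone rep1.
Definition expo (d : K) : int := epsilon (inhabits 0) (fun m => d = gmul (emb m) (rep d)).
Lemma expo_spec d : d = gmul (emb (expo d)) (rep d).
Proof.
apply: (@epsilon_spec int (inhabits 0) (fun m => d = gmul (emb m) (rep d))).
have [m e] := rep_cos d. exists (- m). by rewrite e gmulA -emb_add addNr emb0 gmul1l.
Qed.
Lemma gmul_cancr' (a b c : K) : gmul b a = gmul c a -> b = c.
Proof. move=> h; by rewrite -(gKVl _ a b) h gKVl. Qed.
Lemma expo_uniq d m : d = gmul (emb m) (rep d) -> expo d = m.
Proof.
move=> e. apply: emb_inj. apply: (@gmul_cancr' (rep d)). by rewrite -expo_spec.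
Qed.
Lemma RT_eq (r1 r2 : RT) : sval r1 = sval r2 -> r1 = r2.
Proof. case: r1 r2 => a ha [b hb] /= e; subst b; f_equal; apply: proof_irrelevance. Qed.

Definition mkfdec (d : K) : int * RT := (expo d, exist _ (rep d) (rep_rep d)).
Lemma mk_spec d : d = gmul (emb (mkfdec d).1) (sval (mkfdec d).2).
Proof. exact: expo_spec. Qed.
Lemma mk_emb m d : mkfdec (gmul (emb m) d) = (m + (mkfdec d).1, (mkfdec d).2).
Proof.
rewrite /mkfdec /=. congr pair.
  apply: expo_uniq. by rewrite rep_emb emb_add -gmulA -expo_spec.
apply: RT_eq => /=. exact: rep_emb.
Qed.
Lemma mk_tv t : mkfdec (sval t) = (0, t).
Proof.
rewrite /mkfdec; congr pair.
  apply: expo_uniq. by rewrite emb0 gmul1l (proj2_sig t).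
apply: RT_eq => /=. exact: (proj2_sig t).
Qed.
Definition mkFac : Fac :=
  @Build_Fac K emb emb_add RT rt1' (@sval K _) (erefl _) mkfdec mk_spec mk_emb mk_tv.
End MkFac.

End M4.
Import M4.

Module M5.
Import GRing.Theory Num.Theory.
Local Open Scope ring_scope.

Definition ZG : AbsGroup :=
  @Build_AbsGroup int (fun a b => a + b) 0 (fun a => - a)
    (fun a b c => addrA a b c) (@add0r _) (@addr0 _) (@addNr _) (@addrN _).

Lemma gpowZ (y : ZG) n : gpow y n = (y : int) *+ n.
Proof. elim: n => [|n IH] //=. by rewrite IH mulrS. Qed.

Section BFac.
Variable l : nat.
Hypothesis hl : (1 < l)%N.
Definition embB (m : int) : ZG := m * (l : int).
Lemma embB_add m n : embB (m + n) = gmul (embB m) (embB n).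
Proof. by rewrite /embB /= mulrDl. Qed.
Lemma embB_triv m : embB m = gone -> m = 0.
Proof.
rewrite /embB /= => /eqP; rewrite mulf_eq0 => /orP [/eqP //|]. move=> h; exfalso; move: h hl. by case: l.
Qed.
Definition FB : Fac := @mkFac ZG embB embB_add embB_triv.
Definition chiB (t : FB) : 'Z_l := ((t : int)%:~R).
Lemma chiB_mul a b : chiB (gmul a b) = chiB a + chiB b.
Proof. by rewrite /chiB /= intrD. Qed.
Lemma chiB_emb m : chiB (femb FB m) = 0.
Proof.
rewrite /chiB /= /embB intrM. have -> : ((l : int)%:~R : 'Z_l) = (l%:R) by [].
by rewrite pchar_Zp // mulr0.
Qed.
Lemma chiB_tors (y : FB) n : (0 < n)%N -> gpow y n = gone -> chiB y = 0.
Proof.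
move=> n0; rewrite gpowZ /= => /eqP. rewrite mulrn_eq0 => /orP [/eqP n00|/eqP ->] //.
by rewrite n00 in n0.
Qed.
End BFac.

End M5.
Import M5.

Module M6.
Import Order.TTheory GRing.Theory Num.Theory.
Local Open Scope ring_scope.

Record perm := Perm { pf : int -> int; pg : int -> int;
  pfg : forall x, pf (pg x) = x; pgf : forall x, pg (pf x) = x }.

Lemma perm_eq (p q : perm) : (forall x, pf p x = pf q x) -> p = q.
Proof.
case: p q => f g fg gf [f' g' fg' gf'] /= e.
have ef : f = f' := functional_extensionality _ _ e.
subst f'.
have eg : g = g'.
  apply: functional_extensionality => x. by rewrite -{1}(fg' x) gf.
subst g'. f_equal; apply: proof_irrelevance.
Qed.

Definition pmul (p q : perm) : perm.
Proof.
refine (@Perm (fun x => pf p (pf q x)) (fun x => pg q (pg p x)) _ _) => x.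
  by rewrite !pfg.
by rewrite !pgf.
Defined.
Definition pone : perm := @Perm id id (fun _ => erefl) (fun _ => erefl).
Definition pinv (p : perm) : perm := @Perm (pg p) (pf p) (pgf p) (pfg p).
Lemma pmulA a b c : pmul a (pmul b c) = pmul (pmul a b) c.
Proof. by apply: perm_eq. Qed.
Lemma pmul1l a : pmul pone a = a.
Proof. by apply: perm_eq. Qed.
Lemma pmul1r a : pmul a pone = a.
Proof. by apply: perm_eq. Qed.
Lemma pmulVl a : pmul (pinv a) a = pone.
Proof. apply: perm_eq => x /=; exact: pgf. Qed.
Lemma pmulVr a : pmul a (pinv a) = pone.
Proof. apply: perm_eq => x /=; exact: pfg. Qed.
Definition PG : AbsGroup := Build_AbsGroup pmulA pmul1l pmul1r pmulVl pmulVr.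

Lemma gpow_pf (p : PG) n x : pf (gpow p n) x = iter n (pf p) x.
Proof. elim: n x => [|n IH] x //=. by rewrite IH. Qed.

Lemma dm (q r p : int) : 0 < p -> 0 <= r < p ->
  ((q * p + r) %/ p)%Z = q /\ ((q * p + r) %% p)%Z = r.
Proof.
move=> p0 hr; split.
  rewrite divzMDl; last by rewrite gt_eqF.
  rewrite divz_small ?addr0 //. by rewrite gtz0_abs.
by rewrite modzMDl modz_small.
Qed.

Section Rot.
Variables m p o : int.
Hypothesis m0 : 0 < m.
Hypothesis mp : m <= p.
Definition rot (t : int) : int :=
  let u := t - o in
  if ((u %% p)%Z < m) then o + (u %/ p)%Z * p + ((((u %% p)%Z + 1) %% m)%Z) else t.
Lemma rot_iter i t : iter i rot t =
  let u := t - o in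
  if ((u %% p)%Z < m) then o + (u %/ p)%Z * p + ((((u %% p)%Z + i%:Z) %% m)%Z) else t.
Proof.
have p0 : 0 < p by apply: lt_le_trans mp.
rewrite /=. set u := t - o. set q := (u %/ p)%Z. set r := (u %% p)%Z.
have r0 : 0 <= r by rewrite modz_ge0 // gt_eqF.
have m0' : m != 0 by rewrite gt_eqF.
case: ifP => hr; last first.
  elim: i => [|i IH] //=. by rewrite IH /rot -/u -/r hr.
elim: i => [|i IH] /=.
  rewrite addr0 modz_small; last by rewrite r0 hr.
  by rewrite /q /r -addrA -divz_eq /u addrC subrK.
rewrite IH /rot.
set ri := (((r + i%:Z) %% m))%Z.
have ri0 : 0 <= ri by rewrite modz_ge0.
have rim : ri < m by rewrite ltz_pmod.
have rip : ri < p by apply: lt_le_trans mp.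
have -> : o + q * p + ri - o = q * p + ri by rewrite addrAC [o + _]addrC addrK.
have [-> ->] := dm q ri p p0 (introT andP (conj ri0 rip)).
rewrite rim. congr (_ + _).
by rewrite /ri modzDml -addrA -addn1 PoszD.
Qed.
Lemma rot_m t : iter `|m|%N rot t = t.
Proof.
rewrite rot_iter /=. case: ifP => // hr.
have -> : (`|m|%N : int) = m by rewrite gtz0_abs.
rewrite modzDr modz_small; last by rewrite hr modz_ge0 // gt_eqF // (lt_le_trans m0 mp).
by rewrite -addrA -divz_eq addrC subrK.
Qed.
Definition rotP : perm.
Proof.
refine (@Perm rot (iter (`|m|.-1)%N rot) _ _) => x.
  rewrite -iterS prednK ?rot_m //. by rewrite absz_gt0 gt_eqF.
rewrite -iterSr prednK ?rot_m //. by rewrite absz_gt0 gt_eqF.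
Defined.
Lemma rotP_pow : gpow (rotP : PG) `|m|%N = gone.
Proof. apply: perm_eq => x. by rewrite gpow_pf rot_m. Qed.
End Rot.


Lemma rot_val (m p o q r : int) (m0 : 0 < m) (mp : m <= p) : 0 <= r < m ->
  rot m p o (o + q * p + r) = o + q * p + ((r + 1) %% m)%Z.
Proof.
move=> /andP [r0 rm].
have p0 : 0 < p by apply: lt_le_trans mp.
have rp : r < p by apply: lt_le_trans mp.
rewrite /rot. have -> : o + q * p + r - o = q * p + r by rewrite addrAC [o + _]addrC addrK.
have [-> ->] := dm q r p p0 (introT andP (conj r0 rp)). by rewrite rm.
Qed.

Section AB.
Variables j k : nat.
Hypothesis hj : (1 < j)%N.
Hypothesis hk : (1 < k)%N.
Definition PP : int := (j : int) + (k : int) - 2.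
Lemma j0 : 0 < (j : int). Proof. rewrite ltz_nat. lia. Qed.
Lemma k0 : 0 < (k : int). Proof. rewrite ltz_nat. lia. Qed.
Lemma jP : (j : int) <= PP. Proof. rewrite /PP. have : (2 <= k)%N by []. lia. Qed.
Lemma kP : (k : int) <= PP. Proof. rewrite /PP. have : (2 <= j)%N by []. lia. Qed.
Lemma PP0 : 0 < PP. Proof. exact: (lt_le_trans j0 jP). Qed.
Definition aP : PG := rotP (j:int) PP 0 j0 jP.
Definition bP : PG := rotP (k:int) PP ((j : int) - 1) k0 kP.
Lemma aP_pow : gpow aP j = gone.
Proof. exact: (rotP_pow (j:int) PP 0 j0 jP). Qed.
Lemma bP_pow : gpow bP k = gone.
Proof. exact: (rotP_pow (k:int) PP ((j : int) - 1) k0 kP). Qed.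
Definition alP : PG := gmul aP bP.
Lemma alP_val (n : int) : pf alP (n * PP) = (n - 1) * PP.
Proof.
rewrite /alP /= /bP /aP /=.
have -> : n * PP = ((j : int) - 1) + (n - 1) * PP + ((k : int) - 1).
  rewrite /PP. ring.
rewrite rot_val ?k0 ?kP //; last by apply/andP; split; lia.
have -> : ((k : int) - 1 + 1) = k by ring.
rewrite modzz addr0.
have -> : (j : int) - 1 + (n - 1) * PP = 0 + (n - 1) * PP + ((j : int) - 1) by ring.
rewrite rot_val ?j0 ?jP //; last by apply/andP; split; lia.
have -> : ((j : int) - 1 + 1) = j by ring.
by rewrite modzz addr0 add0r.
Qed.
Lemma gpow_alP (n : nat) (x : int) : pf (gpow alP n) (x * PP) = (x - (n : int)) * PP.
Proof.
elim: n x => [|n IH] x; first by rewrite /= subr0.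
change (pf alP (pf (gpow alP n) (x * PP)) = (x - (n.+1 : int)) * PP).
rewrite IH alP_val. congr (_ * _). rewrite -addn1 PoszD. ring.
Qed.
Lemma alP_triv (m : int) : @zpow PG alP m = gone -> m = 0.
Proof.
move=> /(f_equal (fun q : PG => pf q 0)).
case: m => [n|n] h.
  change (pf (gpow alP n) 0 = 0) in h. move: h.
  have := gpow_alP n 0; rewrite mul0r => -> /eqP.
  rewrite mulf_eq0 (gt_eqF PP0) orbF add0r oppr_eq0 => /eqP ->. by [].
have e : pf (gpow alP n.+1) ((n.+1 : int) * PP) = 0 by rewrite gpow_alP subrr mul0r.
have : pg (gpow alP n.+1) 0 = (n.+1 : int) * PP by rewrite -e pgf.
change (pg (gpow alP n.+1) 0 = 0) in h. rewrite h.
move=> /esym /eqP. rewrite mulf_eq0 (gt_eqF PP0) orbF => /eqP. by [].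
Qed.
End AB.

End M6.
Import M6.

Module M7.
Import GRing.Theory Num.Theory.
Local Open Scope ring_scope.

Section NC.
Variable G : AbsGroup.
Lemma nc_normal (S : G -> Prop) : normal_subgroup (normal_closure S).
Proof.
split.
- by move=> N [].
- move=> a b ha hb N hN hS; case: (hN) => _ hm _ _; apply: hm; [exact: ha|exact: hb].
- move=> a ha N hN hS; case: (hN) => _ _ hi _; apply: hi; exact: ha.
- move=> g n hn N hN hS; case: (hN) => _ _ _ hc; apply: hc; exact: hn.
Qed.
Lemma nc_sub (S : G -> Prop) s : S s -> normal_closure S s.
Proof. by move=> hs N _ hS; apply: hS. Qed.
Lemma nc_min (S N : G -> Prop) : normal_subgroup N -> (forall s, S s -> N s) ->
  forall g, normal_closure S g -> N g.
Proof. by move=> hN hS g hg; apply: hg. Qed.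
Lemma ns_pow (N : G -> Prop) a n : normal_subgroup N -> N a -> N (gpow a n).
Proof.
case=> h1 hm _ _ ha; elim: n => [|n IH] //=; exact: hm.
Qed.
End NC.

Lemma idV (G : AbsGroup) (a w v : G) : gmul (ginv a) (ginv v) =
  gmul (gmul (ginv w) (gmul (ginv (gmul a (ginv w))) w)) (ginv (gmul v w)).
Proof. by rewrite !ginvM ginvK !gmulA gmulVl gmul1l gKVl. Qed.
Lemma idM (G : AbsGroup) (a b u v : G) : gmul (gmul a b) (ginv (gmul u v)) =
  gmul (gmul a (ginv u)) (gmul (ginv (ginv u)) (gmul (gmul b (ginv v)) (ginv u))).
Proof. by rewrite ginvK ginvM !gmulA gKVr. Qed.

Section GPart.
Variables (j k l : nat) (hj : (1 < j)%N) (hk : (1 < k)%N) (hl : (1 < l)%N).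
Variables (G : AbsGroup) (x y z : G).
Hypotheses (hx : gpow x j = gone) (hy : gpow y k = gone) (hz : gmul x y = gpow z l).
Hypothesis hgen : forall g, generated3 x y z g.
Variable f : G -> 'Z_l.
Hypothesis fM : forall a b, f (gmul a b) = f a + f b.
Hypotheses (fx : f x = 0) (fy : f y = 0) (fz : f z = 1).
Hypothesis ftors : forall g n, (0 < n)%N -> gpow g n = gone -> f g = 0.

Lemma f1 : f gone = 0.
Proof. apply: (@addrI _ (f gone)). by rewrite -fM gmul1l addr0. Qed.
Lemma fV a : f (ginv a) = - f a.
Proof. apply/eqP; rewrite -addr_eq0 -fM gmulVl; apply/eqP; exact: f1. Qed.
Lemma fX a n : f (gpow a n) = f a *+ n.
Proof. elim: n => [|n IH] /=; first exact: f1. by rewrite fM IH mulrS. Qed.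

Definition T1 := Tor (G:=G) 1.
Lemma T1n : normal_subgroup T1.
Proof. exact: nc_normal. Qed.
Lemma T1x : T1 x.
Proof. apply: nc_sub; exists j; split => //; lia. Qed.
Lemma T1y : T1 y.
Proof. apply: nc_sub; exists k; split => //; lia. Qed.
Lemma T1_1 : T1 gone. Proof. by case: T1n. Qed.
Lemma T1M a b : T1 a -> T1 b -> T1 (gmul a b). Proof. by case: T1n => _ h _ _; apply: h. Qed.
Lemma T1V a : T1 a -> T1 (ginv a). Proof. by case: T1n => _ _ h _; apply: h. Qed.
Lemma T1C g a : T1 a -> T1 (gmul (ginv g) (gmul a g)). Proof. by case: T1n => _ _ _ h; apply: h. Qed.
Lemma T1zl n : T1 (gpow z (l * n)).
Proof. rewrite gpowM -hz. apply: (@ns_pow G T1 _ n T1n). apply: T1M; [exact: T1x|exact: T1y]. Qed.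

Lemma Tor1_ker g : T1 g -> f g = 0.
Proof.
move=> hg; apply: (@nc_min G _ (fun g => f g = 0) _ _ g hg).
  split.
  - exact: f1.
  - by move=> a b ha hb; rewrite fM ha hb addr0.
  - by move=> a ha; rewrite fV ha oppr0.
  - by move=> g' n hn; rewrite !fM fV hn add0r addNr.
move=> s [n [n0 hs]]. exact: (ftors s n n0 hs).
Qed.

Definition Pg (g : G) := exists n : nat, T1 (gmul g (ginv (gpow z n))) /\ f g = n%:R.

Lemma Pg_all g : Pg g.
Proof.
apply: hgen.
- exists 0%N; split; last by rewrite f1.
  by rewrite /= ginv1 gmul1r; exact: T1_1.
- move=> a b [na [ha fa]] [nb [hb fb]]. exists (na + nb)%N; split; last by rewrite fM fa fb natrD.
  rewrite gpowD idM.
  apply: T1M => //; exact: T1C.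
- move=> a [na [ha fa]]. exists ((l - 1) * na)%N; split.
    rewrite (idV _ a (gpow z na)) -gpowD.
    apply: T1M; first by apply: T1C; exact: T1V.
    apply: T1V. have -> : ((l - 1) * na + na = l * na)%N.
      by rewrite -{2}(mul1n na) -mulnDl subnK //; lia.
    exact: T1zl.
  apply/eqP; rewrite fV fa eq_sym -addr_eq0 -natrD.
  have -> : ((l - 1) * na + na = l * na)%N by rewrite -{2}(mul1n na) -mulnDl subnK //; lia.
  by rewrite natrM pchar_Zp // mul0r.
- exists 0%N; split; last by rewrite fx.
  by rewrite /= ginv1 gmul1r; exact: T1x.
- exists 0%N; split; last by rewrite fy.
  by rewrite /= ginv1 gmul1r; exact: T1y.
- exists 1%N; split; last by rewrite fz.
  rewrite /= gmul1r gmulVr; exact: T1_1.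
Qed.

Lemma ker_Tor1 g : f g = 0 -> T1 g.
Proof.
move=> fg; have [n [hn fn]] := Pg_all g.
move: fn; rewrite fg => /esym /(f_equal (@nat_of_ord _)).
rewrite val_Zp_nat // => /= hmod.
have -> : g = gmul (gmul g (ginv (gpow z n))) (gpow z n) by rewrite gKVr.
apply: T1M => //.
have -> : n = (l * (n %/ l))%N by rewrite mulnC (divn_eq n l) hmod addn0 mulnK //; lia.
exact: T1zl.
Qed.
End GPart.

End M7.
Import M7.

Theorem proposition4p1 (j k l : nat) (hj : (1 < j)%N) (hk : (1 < k)%N) (hl : (1 < l)%N)
    (G : AbsGroup) (x y z : G) (hG : is_presentation x y z j k l) :
  (exists f : G -> 'Z_l,
      [/\ (forall a b : G, f (gmul a b) = f a + f b),
          (forall c : 'Z_l, exists g : G, f g = c) &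
          (forall g : G, f g = 0 <-> Tor 1 g)])
  /\ TorLen_eq G 2.
Proof.
case: hG => hx hy hz hgen hup.
pose FA := @mkFac PG (zpow PG (alP j k hj hk)) (zpowD PG (alP j k hj hk)) (alP_triv j k hj hk).
pose FBl := FB l hl.
pose H := HX FA FBl.
pose aH : H := iA FA FBl (aP j k hj hk).
pose bH : H := iA FA FBl (bP j k hj hk).
pose cH : H := iB FA FBl (1 : int).
have ra : gpow aH j = gone.
  by rewrite /aH -(homX _ _ _ (iA_hom FA FBl)) aP_pow (hom1 _ _ _ (iA_hom FA FBl)).
have rb : gpow bH k = gone.
  by rewrite /bH -(homX _ _ _ (iA_hom FA FBl)) bP_pow (hom1 _ _ _ (iA_hom FA FBl)).
have rc : gmul aH bH = gpow cH l.
  apply: Xeq. rewrite /aH /bH /cH -(iA_hom FA FBl) -(homX _ _ _ (iB_hom FA FBl)).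
  have e1 : gmul (aP j k hj hk) (bP j k hj hk) = femb FA 1.
    have -> : femb FA 1 = gmul (alP j k hj hk) gone by [].
    by rewrite gmul1r.
  have e2 : gpow (1 : FBl) l = femb FBl 1.
    by rewrite gpowZ /= /embB mul1r natz.
  by rewrite e1 e2 iA_emb iB_emb.
have [psi [hpsi px py pz]] := hup H aH bH cH ra rb rc.
pose chi := chiB l hl.
pose f (g : G) : 'Z_l := piX FA FBl _ chi (psi g).
have fM : forall a b, f (gmul a b) = f a + f b.
  by move=> a b; rewrite /f hpsi (piX_mul _ _ _ _ (chiB_mul l hl) (chiB_emb l hl)).
have fx : f x = 0 by rewrite /f px piX_iA.
have fy : f y = 0 by rewrite /f py piX_iA.
have fz : f z = 1.
  rewrite /f pz (piX_iB _ _ _ _ (chiB_mul l hl) (chiB_emb l hl)). by rewrite /chi /chiB mulr1z.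
have ftors : forall g n, (0 < n)%N -> gpow g n = gone -> f g = 0.
  move=> g n n0 hg. rewrite /f.
  apply: (tors_pi _ _ _ chi (chiB_mul l hl) (chiB_emb l hl) (chiB_tors l hl) _ n n0).
  by rewrite -(homX _ _ _ hpsi) hg (hom1 _ _ _ hpsi).
have hker := @ker_Tor1 j k l hj hk hl G x y z hx hy hz hgen f fM fx fy fz.
have htor := @Tor1_ker l G f fM ftors.
have T2 : forall g : G, Tor 2 g.
  move=> g. change (normal_closure (fun h : G => exists n, (0 < n)%N /\ Tor 1 (gpow h n)) g). apply: (@nc_sub G _ g). exists l; split; first by apply: ltnW.
  apply: hker. by rewrite (fX _ _ _ fM) -mulr_natr pchar_Zp // mulr0.
split.
  exists f; split => //.
    move=> c. exists (gpow z c). by rewrite (fX _ _ _ fM) fz natr_Zp.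
  move=> g; split; [exact: hker|exact: htor].
split.
  move=> g; split => _; [by exists 2%N|exact: T2].
have hz2 : Tor_inf z by exists 2%N; exact: T2.
case=> [|[|m]] // _ hall.
  have h0 : z = gone := proj2 (hall z) hz2.
  have : f z = 0 by rewrite h0 (f1 _ _ _ fM).
  by rewrite fz => /eqP; rewrite oner_eq0.
have : f z = 0 by apply: htor; exact: (proj2 (hall z) hz2).
by rewrite fz => /eqP; rewrite oner_eq0.
Qed.
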